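(* Let $p$ be even and let $\mathcal{C}_0$ be a two-sided $p$-periodic CMV matrix with discriminant $\Delta_{\mathcal{C}_0}$ and isospectral torus $\mathcal{T}_{\mathcal{C}_0}$. Given a two-sided (not a priori periodic) CMV matrix $\mathcal{C}$, we have $\Delta_{\mathcal{C}_0}(\mathcal{C})=S^p+S^{-p}$ if and only if $\mathcal{C}\in\mathcal{T}_{\mathcal{C}_0}$, where $S$ is the right shift on $\ell^2(\mathbb{Z})$.
   Context: For $\alpha\in\mathbb{D}=\{|z|<1\}$ let $\rho=(1-|\alpha|^2)^{1/2}$ and $\Theta(\alpha)=\begin{pmatrix}\bar\alpha&\rho\\ \rho&-\alpha\end{pmatrix}$. Given $\{\alpha_n\}_{n\in\mathbb{Z}}\subset\mathbb{D}$, the two-sided CMV matrix is $\mathcal{C}=\mathcal{L}\mathcal{M}$ on $\ell^2(\mathbb{Z})$, where $\mathcal{L}=\bigoplus_j\Theta(\alpha_{2j})$ with $\Theta(\alpha_{2j})$ acting on the coordinates $(2j,2j+1)$, and $\mathcal{M}=\bigoplus_j\Theta(\alpha_{2j-1})$ with $\Theta(\alpha_{2j-1})$ acting on the coordinates $(2j-1,2j)$; $\mathcal{C}$ is unitary. It is $p$-periodic if $\alpha_{n+p}=\alpha_n$. For periodic $\mathcal{C}_0$ with coefficients $\alpha^{(0)}_n$, define $M_n(z)=(\rho^{(0)}_n)^{-1}\begin{pmatrix}z&-\bar\alpha^{(0)}_n\\-\alpha^{(0)}_nz&1\end{pmatrix}$ and the discriminant $\Delta_{\mathcal{C}_0}(z)=\mathrm{Tr}\bigl(z^{-p/2}M_{p-1}(z)\cdots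 M_0(z)\bigr)$, a Laurent polynomial real on the unit circle; $\Delta_{\mathcal{C}_0}(\mathcal{C})$ is this Laurent polynomial applied to the unitary $\mathcal{C}$ (using $\mathcal{C}^{-1}=\mathcal{C}^*$). The isospectral torus $\mathcal{T}_{\mathcal{C}_0}$ is the set of two-sided $p$-periodic CMV matrices with the same discriminant as $\mathcal{C}_0$. $(Su)_n=u_{n-1}$. *)

(* Defs.v *)
From HB Require Import structures.
From mathcomp Require Import all_boot all_order all_algebra.
From mathcomp Require Import complex.
From mathcomp Require Import reals.
Set Implicit Arguments. Unset Strict Implicit. Unset Printing Implicit Defensive.
Import Order.TTheory GRing.Theory Num.Theory.
Local Open Scope ring_scope.

Section CMV.
Variable R : realType.
Local Notation C := R[i].

Definition zseq := int -> C.
Definition zop := zseq -> zseq.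

Definition in_disk (a : C) : bool := `|a| < 1.
Definition rho (a : C) : C := sqrtC (1 - `|a| ^+ 2).

Definition zparity (n : int) : bool := odd (absz n).

(* Block-diagonal operator  (+)_{m : parity m = e} Theta(alpha_m) acting on the
   coordinates (m, m+1).  Theta(a) = [[conj a, rho a], [rho a, -a]]. *)
Definition theta_op (e : bool) (alpha : int -> C) : zop :=
  fun u n =>
    if zparity n == e then
      conjc (alpha n) * u n + rho (alpha n) * u (n + 1)
    else
      rho (alpha (n - 1)) * u (n - 1) - alpha (n - 1) * u n.

(* adjoint blocks: Theta(a)^* = [[a, rho a], [rho a, -conj a]] *)
Definition theta_adj_op (e : bool) (alpha : int -> C) : zop :=
  fun u n =>
    if zparity n == e then
      alpha n * u n + rho (alpha n) * u (n + 1)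
    else
      rho (alpha (n - 1)) * u (n - 1) - conjc (alpha (n - 1)) * u n.

Definition Lop (alpha : int -> C) : zop := theta_op false alpha.
Definition Mop (alpha : int -> C) : zop := theta_op true alpha.

(* C = L M  and  C^* = C^{-1} = M^* L^* *)
Definition cmv (alpha : int -> C) : zop := fun u => Lop alpha (Mop alpha u).
Definition cmv_adj (alpha : int -> C) : zop :=
  fun u => theta_adj_op true alpha (theta_adj_op false alpha u).

(* C^j for j : int, with C^{-1} = C^* *)
Definition cmv_pow (alpha : int -> C) (j : int) : zop :=
  match j with
  | Posz k => iter k (cmv alpha)
  | Negz k => iter k.+1 (cmv_adj alpha)
  end.

Definition is_cmv_coeffs (alpha : int -> C) : Prop := forall n, in_disk (alpha n).
Definition periodic (p : nat) (alpha : int -> C) : Prop :=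
  forall n, alpha (n + p%:Z) = alpha n.

Definition transfer (a : C) : 'M[{poly C}]_2 :=
  ((rho a)^-1)%:P *: (\matrix_(i < 2, j < 2)
     (if (i == 0) && (j == 0) then 'X
      else if (i == 0) && (j == 1) then - (conjc a)%:P
      else if (i == 1) && (j == 0) then - (a *: 'X)
      else 1) : 'M[{poly C}]_2).

(* Tr(M_{p-1}(z) ... M_0(z)), a polynomial of degree <= p; the discriminant is
   Delta(z) = z^{-p/2} * disc_poly p alpha (z). *)
Definition disc_poly (p : nat) (alpha : int -> C) : {poly C} :=
  \tr (\prod_(i < p) transfer (alpha (p.-1 - i)%N%:Z)).

(* Delta_{C0}(C), the Laurent polynomial Delta applied to the unitary C:
   sum_k q_k C^(k - p/2) where q = disc_poly p alpha0. *)
Definition disc_apply (p : nat) (alpha0 alpha : int -> C) : zop :=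
  fun u n => \sum_(k < p.+1)
     (disc_poly p alpha0)`_k * cmv_pow alpha (k%:Z - (p./2)%:Z) u n.

(* S^p + S^{-p}, with (S u)_n = u_{n-1} *)
Definition shift_sum (p : nat) : zop :=
  fun u n => u (n - p%:Z) + u (n + p%:Z).

Definition in_iso_torus (p : nat) (alpha0 : int -> C) (Cop : zop) : Prop :=
  exists beta : int -> C, [/\ is_cmv_coeffs beta, periodic p beta,
     Cop = cmv beta & disc_poly p beta = disc_poly p alpha0].

End CMV.

(* Main.v *)
Require Import Defs.
From HB Require Import structures.
From mathcomp Require Import all_boot all_order all_algebra.
From mathcomp Require Import complex.
From mathcomp Require Import reals.
From mathcomp Require Import zify.
From Stdlib Require Import FunctionalExtensionality.
From mathcomp Require Import ring.
Import Order.TTheory GRing.Theory Num.Theory.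
Local Open Scope ring_scope.
Set Implicit Arguments. Unset Strict Implicit. Unset Printing Implicit Defensive.



Section Basic.
Variable R : realType.
Local Notation C := R[i].

Lemma zparity_add1 (n : int) : zparity (n + 1) = ~~ zparity n.
Proof. rewrite /zparity; lia. Qed.
Lemma zparity_sub1 (n : int) : zparity (n - 1) = ~~ zparity n.
Proof. rewrite /zparity; lia. Qed.
Lemma zparity_addp (n : int) (p : nat) : ~~ odd p -> zparity (n + p%:Z) = zparity n.
Proof. rewrite /zparity; lia. Qed.

Lemma rho_sqr (a : C) : rho a ^+ 2 = 1 - a * conjc a.
Proof. by rewrite /rho sqrtCK normCK. Qed.
Lemma rho_id (a : C) : rho a * rho a + conjc a * a = 1.
Proof. rewrite -expr2 rho_sqr; ring. Qed.
Lemma rho_gt0 (a : C) : in_disk a -> 0 < rho a.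
Proof.
rewrite /in_disk /rho => H; rewrite sqrtC_gt0 subr_gt0.
have h0 : 0 <= `|a| by [].
by rewrite expr_lt1.
Qed.
Lemma rho_neq0 (a : C) : in_disk a -> rho a != 0.
Proof. by move/rho_gt0; rewrite lt0r => /andP[]. Qed.
Lemma conj_rho (a : C) : in_disk a -> conjc (rho a) = rho a.
Proof. move/rho_gt0/ltW => h. exact: geC0_conj. Qed.
End Basic.

Lemma lincomb (R : realType) (x y t e : R[i]) : e = 0 -> x - y = t * e -> x = y.
Proof. by move=> -> ; rewrite mulr0 => /eqP; rewrite subr_eq0 => /eqP. Qed.
Lemma rho_e (R : realType) (a : R[i]) : rho a * rho a + conjc a * a - 1 = 0.
Proof. by rewrite rho_id subrr. Qed.



Ltac decide_eqs := repeat match goal with |- context [@eq_op ?T ?x ?y] =>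
   first [ rewrite (_ : (x == y) = true); last by lia
         | rewrite (_ : (x == y) = false); last by lia ] end.

Section Ops.
Variable R : realType.
Local Notation C := R[i].
Local Notation zseq := (zseq R).
Local Notation zop := (zop R).

Definition linop (F : zop) := forall (c : C) (u v : zseq) n,
  F (fun x => c * u x + v x) n = c * F u n + F v n.
Definition zeroop (F : zop) := forall n, F (fun _ => 0) n = 0.
Definition local (r : nat) (F : zop) := forall (u v : zseq) n,
  (forall m, `|m - n| <= r%:Z -> u m = v m) -> F u n = F v n.

Lemma linop_fun F c u v : linop F ->
  F (fun x => c * u x + v x) = (fun n => c * F u n + F v n).
Proof. by move=> H; apply: functional_extensionality => n; rewrite H. Qed.

Lemma linop_comp F G : linop F -> linop G -> linop (fun u => F (G u)).
Proof. by move=> HF HG c u v n /=; rewrite linop_fun // HF. Qed.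
Lemma zeroop_comp F G : zeroop F -> zeroop G -> zeroop (fun u => F (G u)).
Proof.
move=> HF HG n /=.
have -> : G (fun _ => 0) = (fun _ => 0) by apply: functional_extensionality.
exact: HF.
Qed.
Lemma local_comp r s F G : local r F -> local s G -> local (r + s) (fun u => F (G u)).
Proof.
move=> HF HG u v n H /=; apply: HF => m Hm; apply: HG => m' Hm'.
apply: H; rewrite PoszD; lia.
Qed.
Lemma local_mono r s F : (r <= s)%N -> local r F -> local s F.
Proof. move=> rs HF u v n H; apply: HF => m Hm; apply: H; lia. Qed.

Lemma linop_iter k F : linop F -> linop (iter k F).
Proof.
move=> HF; elim: k => [|k IH] c u v n //=.
rewrite (_ : iter k F (fun x => c * u x + v x) = (fun n => c * iter k F u n + iter k F v n)).
  exact: HF.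
by apply: functional_extensionality => m; rewrite IH.
Qed.
Lemma zeroop_iter k F : zeroop F -> zeroop (iter k F).
Proof.
move=> HF; elim: k => [|k IH] n //=.
rewrite (_ : iter k F (fun _ => 0) = (fun _ => 0)); first exact: HF.
by apply: functional_extensionality => m; rewrite IH.
Qed.
Lemma local_iter r k F : local r F -> local (k * r) (iter k F).
Proof.
move=> HF; elim: k => [|k IH].
  by move=> u v n H /=; apply: H; lia.
have h := local_comp HF IH.
move=> u v n H /=; apply: h => m Hm; apply: H; move: Hm; rewrite mulSn; lia.
Qed.

Lemma theta_lin e a : linop (theta_op e a).
Proof. move=> c u v n; rewrite /theta_op; case: ifP => _; ring. Qed.
Lemma theta_adj_lin e a : linop (theta_adj_op e a).
Proof. move=> c u v n; rewrite /theta_adj_op; case: ifP => _; ring. Qed.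
Lemma theta_zero e a : zeroop (theta_op e a).
Proof. move=> n; rewrite /theta_op; case: ifP => _; ring. Qed.
Lemma theta_adj_zero e a : zeroop (theta_adj_op e a).
Proof. move=> n; rewrite /theta_adj_op; case: ifP => _; ring. Qed.
Lemma theta_local e a : local 1 (theta_op e a).
Proof.
move=> u v n H; rewrite /theta_op.
by rewrite !H //; lia.
Qed.
Lemma theta_adj_local e a : local 1 (theta_adj_op e a).
Proof.
move=> u v n H; rewrite /theta_adj_op.
by rewrite !H //; lia.
Qed.

Lemma cmv_lin a : linop (cmv a).
Proof. exact: linop_comp (theta_lin _ _) (theta_lin _ _). Qed.
Lemma cmv_adj_lin a : linop (cmv_adj a).
Proof. exact: linop_comp (theta_adj_lin _ _) (theta_adj_lin _ _). Qed.
Lemma cmv_zero a : zeroop (cmv a).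
Proof. exact: zeroop_comp (theta_zero _ _) (theta_zero _ _). Qed.
Lemma cmv_adj_zero a : zeroop (cmv_adj a).
Proof. exact: zeroop_comp (theta_adj_zero _ _) (theta_adj_zero _ _). Qed.
Lemma cmv_local a : local 2 (cmv a).
Proof. exact: local_comp (theta_local _ _) (theta_local _ _). Qed.
Lemma cmv_adj_local a : local 2 (cmv_adj a).
Proof. exact: local_comp (theta_adj_local _ _) (theta_adj_local _ _). Qed.

Lemma cmv_pow_lin a j : linop (cmv_pow a j).
Proof. case: j => k /=; apply: linop_iter; [exact: cmv_lin|exact: cmv_adj_lin]. Qed.
Lemma cmv_pow_zero a j : zeroop (cmv_pow a j).
Proof. case: j => k /=; apply: zeroop_iter; [exact: cmv_zero|exact: cmv_adj_zero]. Qed.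
Lemma cmv_pow_local a j : local (2 * absz j) (cmv_pow a j).
Proof.
case: j => k /=; rewrite mulnC; apply: local_iter; [exact: cmv_local|exact: cmv_adj_local].
Qed.

End Ops.



Section Unit.
Variable R : realType.
Local Notation C := R[i].
Local Notation zseq := (zseq R).
Local Notation zop := (zop R).

Lemma zpar_next (n : int) e : (zparity (n + 1) == e) = ~~ (zparity n == e).
Proof. by rewrite zparity_add1; case: e; case: (zparity n). Qed.
Lemma zpar_prev (n : int) e : (zparity (n - 1) == e) = ~~ (zparity n == e).
Proof. by rewrite zparity_sub1; case: e; case: (zparity n). Qed.

Lemma theta_adjK e (a : int -> C) (u : zseq) n :
  theta_adj_op e a (theta_op e a u) n = u n.
Proof.
rewrite /theta_adj_op /theta_op.
case: (boolP (zparity n == e)) => H.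
  rewrite zpar_next H /= addrK.
  transitivity ((rho (a n) * rho (a n) + conjc (a n) * a n) * u n); first ring.
  by rewrite rho_id mul1r.
rewrite zpar_prev (negbTE H) /= subrK.
transitivity ((rho (a (n-1)) * rho (a (n-1)) + conjc (a (n-1)) * a (n-1)) * u n); first ring.
by rewrite rho_id mul1r.
Qed.

Lemma theta_Kadj e (a : int -> C) (u : zseq) n :
  theta_op e a (theta_adj_op e a u) n = u n.
Proof.
rewrite /theta_adj_op /theta_op.
case: (boolP (zparity n == e)) => H.
  rewrite zpar_next H /= addrK.
  transitivity ((rho (a n) * rho (a n) + conjc (a n) * a n) * u n); first ring.
  by rewrite rho_id mul1r.
rewrite zpar_prev (negbTE H) /= subrK.
transitivity ((rho (a (n-1)) * rho (a (n-1)) + conjc (a (n-1)) * a (n-1)) * u n); first ring.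
by rewrite rho_id mul1r.
Qed.

Lemma cmv_adjK (a : int -> C) u : cmv_adj a (cmv a u) = u.
Proof.
apply: functional_extensionality => n; rewrite /cmv_adj /cmv /Lop /Mop.
rewrite (_ : theta_adj_op false a (theta_op false a _) = theta_op true a u).
  exact: theta_adjK.
by apply: functional_extensionality => m; rewrite theta_adjK.
Qed.
Lemma cmv_Kadj (a : int -> C) u : cmv a (cmv_adj a u) = u.
Proof.
apply: functional_extensionality => n; rewrite /cmv_adj /cmv /Lop /Mop.
rewrite (_ : theta_op true a (theta_adj_op true a _) = theta_adj_op false a u).
  exact: theta_Kadj.
by apply: functional_extensionality => m; rewrite theta_Kadj.
Qed.

Lemma cmv_pow_cmv (a : int -> C) j u : cmv_pow a j (cmv a u) = cmv a (cmv_pow a j u).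
Proof.
case: j => k; rewrite /cmv_pow.
  by rewrite -iterSr -iterS.
rewrite iterSr cmv_adjK.
by rewrite iterS cmv_Kadj.
Qed.

Definition tau (s : int) (u : zseq) : zseq := fun x => u (x - s).

Lemma theta_tau e (a : int -> C) (p : nat) u n : ~~ odd p -> periodic p a ->
  theta_op e a (tau p%:Z u) n = tau p%:Z (theta_op e a u) n.
Proof.
move=> hp ha; rewrite /tau /theta_op.
have E x : a x = a (x - p%:Z) by rewrite -{1}(subrK p%:Z x) ha.
have -> : zparity (n - p%:Z) = zparity n.
  by rewrite -{2}(subrK p%:Z n) zparity_addp.
rewrite (E n) (E (n - 1)).
have -> : n + 1 - p%:Z = n - p%:Z + 1 by lia.
have -> : n - 1 - p%:Z = n - p%:Z - 1 by lia.
by [].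
Qed.
Lemma theta_adj_tau e (a : int -> C) (p : nat) u n : ~~ odd p -> periodic p a ->
  theta_adj_op e a (tau p%:Z u) n = tau p%:Z (theta_adj_op e a u) n.
Proof.
move=> hp ha; rewrite /tau /theta_adj_op.
have E x : a x = a (x - p%:Z) by rewrite -{1}(subrK p%:Z x) ha.
have -> : zparity (n - p%:Z) = zparity n.
  by rewrite -{2}(subrK p%:Z n) zparity_addp.
rewrite (E n) (E (n - 1)).
have -> : n + 1 - p%:Z = n - p%:Z + 1 by lia.
have -> : n - 1 - p%:Z = n - p%:Z - 1 by lia.
by [].
Qed.

Lemma cmv_tau (a : int -> C) (p : nat) u : ~~ odd p -> periodic p a ->
  cmv a (tau p%:Z u) = tau p%:Z (cmv a u).
Proof.
move=> hp ha; apply: functional_extensionality => n; rewrite /cmv /Lop /Mop.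
rewrite (_ : theta_op true a (tau p%:Z u) = tau p%:Z (theta_op true a u)).
  exact: theta_tau.
by apply: functional_extensionality => m; rewrite theta_tau.
Qed.
Lemma cmv_adj_tau (a : int -> C) (p : nat) u : ~~ odd p -> periodic p a ->
  cmv_adj a (tau p%:Z u) = tau p%:Z (cmv_adj a u).
Proof.
move=> hp ha; apply: functional_extensionality => n; rewrite /cmv_adj.
rewrite (_ : theta_adj_op false a (tau p%:Z u) = tau p%:Z (theta_adj_op false a u)).
  exact: theta_adj_tau.
by apply: functional_extensionality => m; rewrite theta_adj_tau.
Qed.
Lemma iter_comm (F G : zop) : (forall u, F (G u) = G (F u)) ->
  forall k u, iter k F (G u) = G (iter k F u).
Proof. by move=> H; elim=> [|k IH] u //=; rewrite IH H. Qed.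
Lemma cmv_pow_tau (a : int -> C) (p : nat) j u : ~~ odd p -> periodic p a ->
  cmv_pow a j (tau p%:Z u) = tau p%:Z (cmv_pow a j u).
Proof.
move=> hp ha; case: j => k; rewrite /cmv_pow; apply: iter_comm => v.
  exact: cmv_tau.
exact: cmv_adj_tau.
Qed.

Definition delta (m : int) : zseq := fun x => if x == m then 1 else 0.
Definition E (a : int -> C) (n m : int) : C := cmv a (delta m) n.

Lemma E_far a n m : (2 < `|m - n|)%R -> E a n m = 0.
Proof.
move=> H; rewrite /E -(cmv_zero a n); apply: cmv_local => x Hx.
rewrite /delta; case: eqP => // Hxm; exfalso; subst; lia.
Qed.

Lemma E_even_m2 a n : zparity n = false -> E a n (n - 2) = 0.
Proof.
rewrite /E /cmv /Lop /Mop /theta_op /delta /zparity => H.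
rewrite H /=; decide_eqs; ring.
Qed.
Lemma E_even_p2 a n : zparity n = false -> E a n (n + 2) = rho (a n) * rho (a (n + 1)).
Proof.
rewrite /E /cmv /Lop /Mop /theta_op /delta /zparity => H.
rewrite H /=; decide_eqs; ring.
Qed.
Lemma E_odd_m2 a n : zparity n = true -> E a n (n - 2) = rho (a (n - 1)) * rho (a (n - 2)).
Proof.
rewrite /E /cmv /Lop /Mop /theta_op /delta /zparity => H.
rewrite H /=; decide_eqs.
have -> : n - 1 - 1 = n - 2 by lia.
ring.
Qed.
Lemma E_odd_m1 a n : zparity n = true -> E a n (n - 1) = - (rho (a (n - 1)) * a (n - 2)).
Proof.
rewrite /E /cmv /Lop /Mop /theta_op /delta /zparity => H.
rewrite H /=; decide_eqs.
have -> : n - 1 - 1 = n - 2 by lia.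
ring.
Qed.
Lemma E_odd_p1 a n : zparity n = true -> E a n (n + 1) = - (a (n - 1) * rho (a n)).
Proof.
rewrite /E /cmv /Lop /Mop /theta_op /delta /zparity => H.
rewrite H /=; decide_eqs.
ring.
Qed.

End Unit.



Section Szego.
Variable R : realType.
Local Notation C := R[i].
Local Notation zseq := (zseq R).
Local Notation zop := (zop R).
Variable a : int -> C.
Hypothesis ha : forall n, in_disk (a n).

Definition fstep (n : int) (F : zseq * zseq) : zseq * zseq :=
  (fun k => (rho (a n))^-1 * (F.1 (k - 1) - conjc (a n) * F.2 k),
   fun k => (rho (a n))^-1 * (F.2 k - a n * F.1 (k - 1))).
Definition bstep (n : int) (F : zseq * zseq) : zseq * zseq :=
  (fun k => (rho (a n))^-1 * (F.1 (k + 1) + conjc (a n) * F.2 (k + 1)),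
   fun k => (rho (a n))^-1 * (a n * F.1 k + F.2 k)).
Definition d0 : zseq := fun k => if k == 0 then 1 else 0.
Fixpoint fwd (m : nat) : zseq * zseq :=
  if m is m'.+1 then fstep m' (fwd m') else (d0, d0).
Fixpoint bwd (m : nat) : zseq * zseq :=
  if m is m'.+1 then bstep (Negz m') (bwd m') else (d0, d0).
Definition V (n : int) : zseq * zseq :=
  match n with Posz m => fwd m | Negz m => bwd m.+1 end.

Lemma fstep_bstep n F : fstep n (bstep n F) = F.
Proof.
case: F => f g; rewrite /fstep /bstep /=.
have hr := rho_neq0 (ha n).
congr pair; apply: functional_extensionality => k; rewrite subrK.
  apply: (lincomb (t := - ((rho (a n))^-1 * (rho (a n))^-1 * f k)) (rho_e (a n))).
  by field.
apply: (lincomb (t := - ((rho (a n))^-1 * (rho (a n))^-1 * g k)) (rho_e (a n))).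
by field.
Qed.

Lemma Vstep n : V (n + 1) = fstep n (V n).
Proof.
case: n => m.
  by rewrite -PoszD addn1.
case: m => [|m].
  by rewrite /= fstep_bstep.
have -> : Negz m.+1 + 1 = Negz m by lia.
by rewrite /= fstep_bstep.
Qed.
Lemma Vstep' n : V n = fstep (n - 1) (V (n - 1)).
Proof. by rewrite -Vstep subrK. Qed.

Definition hh (n : int) : int := (n %/ 2)%Z.
Definition psi (k n : int) : C :=
  if zparity n then (V n).2 (k + hh n + 1) else (V n).1 (k + hh n).

Lemma M_psi k n : Mop a (psi k) n = theta_adj_op false a (psi (k - 1)) n.
Proof.
rewrite /Mop /theta_op /theta_adj_op /psi.
case: (boolP (zparity n)) => Hn.
  rewrite zparity_add1 zparity_sub1 Hn /=.
  have -> : hh (n + 1) = hh n + 1 by move: Hn; rewrite /hh /zparity; lia.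
  have -> : hh (n - 1) = hh n by move: Hn; rewrite /hh /zparity; lia.
  have -> : k + (hh n + 1) = k + hh n + 1 by lia.
  have -> : k - 1 + hh n + 1 = k + hh n + 1 - 1 by lia.
  have -> : k - 1 + hh n = k + hh n + 1 - 1 - 1 by lia.
  set K := k + hh n + 1.
  rewrite (Vstep n) (Vstep' n) /fstep /=.
  have hr := rho_neq0 (ha n); have hr' := rho_neq0 (ha (n - 1)).
  apply: (lincomb (t := - ((rho (a (n - 1)))^-1 * (V (n - 1)).1 (K - 1 - 1))) (rho_e (a (n - 1)))).
  by field; rewrite hr hr'.
rewrite zparity_add1 zparity_sub1 (negbTE Hn) /=.
have -> : hh (n + 1) = hh n by move: Hn; rewrite /hh /zparity; lia.
have -> : hh (n - 1) = hh n - 1 by move: Hn; rewrite /hh /zparity; lia.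
have -> : k + (hh n - 1) + 1 = k + hh n by lia.
have -> : k - 1 + hh n + 1 = k + hh n by lia.
have -> : k - 1 + hh n = k + hh n - 1 by lia.
set K := k + hh n.
rewrite (Vstep n) (Vstep' n) /fstep /=.
have hr := rho_neq0 (ha n); have hr' := rho_neq0 (ha (n - 1)).
apply: (lincomb (t := (rho (a (n - 1)))^-1 * (V (n - 1)).2 K) (rho_e (a (n - 1)))).
by field; rewrite hr hr'.
Qed.

Lemma C_psi k : cmv a (psi k) = psi (k - 1).
Proof.
apply: functional_extensionality => n; rewrite /cmv /Lop.
rewrite (_ : Mop a (psi k) = theta_adj_op false a (psi (k - 1))).
  exact: theta_Kadj.
by apply: functional_extensionality => m; rewrite M_psi.
Qed.
Lemma Cadj_psi k : cmv_adj a (psi k) = psi (k + 1).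
Proof.
apply: functional_extensionality => n; rewrite /cmv_adj.
rewrite (_ : theta_adj_op false a (psi k) = Mop a (psi (k + 1))).
  exact: theta_adjK.
by apply: functional_extensionality => m; rewrite M_psi addrK.
Qed.
Lemma iter_psi (F : zop) (s : int) : (forall j, F (psi j) = psi (j + s)) ->
  forall (n : nat) k, iter n F (psi k) = psi (k + s * n%:Z).
Proof.
move=> H; elim=> [|n IH] k /=.
  by rewrite mulr0 addr0.
rewrite IH H; congr psi; lia.
Qed.
Lemma cmv_pow_psi j k : cmv_pow a j (psi k) = psi (k - j).
Proof.
case: j => m; rewrite /cmv_pow.
  rewrite (@iter_psi _ (-1)); first by congr psi; lia.
  by move=> i; rewrite C_psi.
rewrite (@iter_psi _ 1); first by congr psi; lia.
by move=> i; rewrite Cadj_psi.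
Qed.

End Szego.



Section PolyAct.
Variable R : realType.
Local Notation C := R[i].
Local Notation zseq := (zseq R).
Implicit Types (P Q : {poly C}) (f g : zseq) (k : int) (c : C).

Definition polyact (P : {poly C}) (f : zseq) : zseq :=
  fun k => \sum_(i < size P) P`_i * f (k - i%:Z).

Lemma polyact_widen P f k N : (size P <= N)%N ->
  polyact P f k = \sum_(i < N) P`_i * f (k - i%:Z).
Proof.
move=> H; rewrite /polyact (big_ord_widen N (fun i => P`_i * f (k - i%:Z))) //.
rewrite [RHS](bigID (fun i : 'I_N => (i < size P)%N)) /=.
rewrite [X in _ = _ + X]big1 ?addr0 // => i; rewrite -leqNgt => hi.
by rewrite nth_default // mul0r.
Qed.

Lemma polyact_add P Q f k : polyact (P + Q) f k = polyact P f k + polyact Q f k.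
Proof.
have hP : (size P <= maxn (size P) (size Q))%N by rewrite leq_maxl.
have hQ : (size Q <= maxn (size P) (size Q))%N by rewrite leq_maxr.
rewrite !(@polyact_widen _ _ _ (maxn (size P) (size Q))) //; last exact: size_polyD.
by rewrite -big_split /=; apply: eq_bigr => i _; rewrite coefD mulrDl.
Qed.
Lemma polyact_opp P f k : polyact (- P) f k = - polyact P f k.
Proof.
rewrite /polyact size_polyN -sumrN; apply: eq_bigr => i _; by rewrite coefN mulNr.
Qed.
Lemma polyact_sub P Q f k : polyact (P - Q) f k = polyact P f k - polyact Q f k.
Proof. by rewrite polyact_add polyact_opp. Qed.
Lemma polyact_C c f k : polyact c%:P f k = c * f k.
Proof.
rewrite (@polyact_widen _ _ _ 1) ?size_polyC_leq1 // big_ord1 coefC /=.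
by rewrite subr0.
Qed.
Lemma polyact_0 f k : polyact 0 f k = 0.
Proof. by rewrite /polyact size_poly0 big_ord0. Qed.
Lemma polyact_1 f k : polyact 1 f k = f k.
Proof. by rewrite -polyC1 polyact_C mul1r. Qed.
Lemma polyact_X f k : polyact 'X f k = f (k - 1).
Proof.
rewrite (@polyact_widen _ _ _ 2) ?size_polyX // !big_ord_recl big_ord0 !coefX /=.
by rewrite mul0r add0r mul1r addr0.
Qed.
Lemma polyact_addf P f g k :
  polyact P (fun x => f x + g x) k = polyact P f k + polyact P g k.
Proof. by rewrite /polyact -big_split /=; apply: eq_bigr => i _; rewrite mulrDr. Qed.
Lemma polyact_scalef P c f k :
  polyact P (fun x => c * f x) k = c * polyact P f k.
Proof. by rewrite /polyact mulr_sumr; apply: eq_bigr => i _; rewrite mulrCA. Qed.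
Lemma polyact_mulX P f k : polyact (P * 'X) f k = polyact P (fun x => f (x - 1)) k.
Proof.
have h : (size (P * 'X)%R <= (size P).+1)%N.
  apply: (leq_trans (size_polyMleq P 'X)); rewrite size_polyX; lia.
rewrite (polyact_widen _ _ h) big_ord_recl coefMX /= mul0r add0r /polyact.
apply: eq_bigr => i _; rewrite coefMX /=; congr (_ * f _).
rewrite /bump /=; lia.
Qed.
Lemma polyact_mulC P c f k : polyact (P * c%:P) f k = polyact P (fun x => c * f x) k.
Proof.
have h : (size (P * c%:P)%R <= size P)%N.
  apply: (leq_trans (size_polyMleq P c%:P)); have := size_polyC_leq1 c.
  case: (size c%:P) => [|[|m]] //= _; by rewrite ?addn0 ?addn1 // leq_pred.
rewrite (polyact_widen _ _ h) /polyact; apply: eq_bigr => i _.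
by rewrite coefMC mulrA.
Qed.
Lemma polyact_mul P Q f k : polyact (P * Q) f k = polyact P (polyact Q f) k.
Proof.
elim/poly_ind: Q f k => [|Q c IH] f k.
  rewrite mulr0 polyact_0 /polyact; symmetry; apply: big1 => i _.
  by rewrite size_poly0 big_ord0 mulr0.
rewrite mulrDr mulrA polyact_add polyact_mulX IH polyact_mulC.
rewrite -polyact_addf; congr (polyact P _ k); apply: functional_extensionality => x.
by rewrite polyact_add polyact_mulX polyact_C.
Qed.

Lemma polyact_eq P f g k : (forall x, f x = g x) -> polyact P f k = polyact P g k.
Proof. move=> H; by rewrite /polyact; apply: eq_bigr => i _; rewrite H. Qed.

Lemma polyact_Xn (n : nat) f k : polyact ('X^n) f k = f (k - n%:Z).
Proof.
rewrite (@polyact_widen _ _ _ n.+1) ?size_polyXn // big_ord_recr /= big1 ?add0r.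
  by rewrite coefXn eqxx mul1r.
by move=> i _; rewrite coefXn (_ : (i == n :> nat) = false) ?mul0r //; apply/negbTE; rewrite neq_ltn ltn_ord.
Qed.

Lemma ord_lift0 : lift ord0 ord0 = (1 : 'I_2). Proof. exact: val_inj. Qed.
Lemma ord_0 : ord0 = (0 : 'I_2). Proof. exact: val_inj. Qed.
Lemma ord2_cases (P : 'I_2 -> Prop) : P 0 -> P 1 -> forall i, P i.
Proof.
move=> h0 h1 i; have : (i == 0) || (i == 1) by case: i => [[|[|m]]].
by case/orP => /eqP ->.
Qed.

Lemma mul2E (A B : 'M[{poly C}]_2) i j : (A * B) i j = A i 0 * B 0 j + A i 1 * B 1 j.
Proof. by rewrite -mulmxE mxE !big_ord_recl big_ord0 addr0 ord_lift0 ord_0. Qed.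
Lemma tr2E (A : 'M[{poly C}]_2) : \tr A = A 0 0 + A 1 1.
Proof. by rewrite /mxtrace !big_ord_recl big_ord0 addr0 ord_lift0 ord_0. Qed.
Lemma one2E i j : (1 : 'M[{poly C}]_2) i j = (i == j)%:R.
Proof. by rewrite mxE. Qed.

Definition d2 (A : 'M[{poly C}]_2) := A 0 0 * A 1 1 - A 0 1 * A 1 0.
Definition adj2 (A : 'M[{poly C}]_2) : 'M[{poly C}]_2 :=
  \matrix_(i < 2, j < 2) (if i == 0 then (if j == 0 then A 1 1 else - A 0 1)
                          else (if j == 0 then - A 1 0 else A 0 0)).

Ltac m2 := apply/matrixP; apply: ord2_cases; apply: ord2_cases;
  rewrite ?mul2E ?tr2E ?mxE /=; ring.

Lemma d2_mul A B : d2 (A * B) = d2 A * d2 B.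
Proof. rewrite /d2 !mul2E; ring. Qed.
Lemma d2_1 : d2 1 = 1.
Proof. by rewrite /d2 !one2E /= mulr1 mulr0 subr0. Qed.
Lemma CH2 (A : 'M[{poly C}]_2) : A * A = \tr A *: A - d2 A *: 1.
Proof. rewrite /d2; m2. Qed.
Lemma adj2_r A : A * adj2 A = d2 A *: 1.
Proof. rewrite /d2; m2. Qed.
Lemma adj2_l A : adj2 A * A = d2 A *: 1.
Proof. rewrite /d2; m2. Qed.
Lemma tr2_mulC (A B : 'M[{poly C}]_2) : \tr (A * B) = \tr (B * A).
Proof. rewrite !tr2E !mul2E; ring. Qed.
Lemma tr2_scale1 (A : 'M[{poly C}]_2) d : \tr (A * (d *: 1)) = d * \tr A.
Proof. rewrite !tr2E !mul2E !mxE /=; ring. Qed.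

Lemma tr_conj (T1 T0 M : 'M[{poly C}]_2) : d2 M != 0 -> T1 * M = M * T0 -> \tr T1 = \tr T0.
Proof.
move=> hd h.
apply: (mulIf hd); rewrite mulrC [RHS]mulrC -!tr2_scale1 -{1}adj2_r -adj2_l.
by rewrite mulrA h -mulrA tr2_mulC -mulrA.
Qed.

Definition mact (A : 'M[{poly C}]_2) (F : zseq * zseq) : zseq * zseq :=
  (fun k => polyact (A 0 0) F.1 k + polyact (A 0 1) F.2 k,
   fun k => polyact (A 1 0) F.1 k + polyact (A 1 1) F.2 k).

Lemma mact_mul A B F : mact (A * B) F = mact A (mact B F).
Proof.
rewrite /mact /=; congr pair; apply: functional_extensionality => k;
rewrite !mul2E !polyact_add !polyact_mul !polyact_addf; ring.
Qed.
Lemma mact_1 F : mact 1 F = F.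
Proof.
case: F => f g; rewrite /mact /= !one2E /=; congr pair; apply: functional_extensionality => k;
by rewrite polyact_1 polyact_0 ?addr0 ?add0r.
Qed.
Lemma mact_CH A F :
  mact A (mact A F) = (fun k => polyact (\tr A) (mact A F).1 k - polyact (d2 A) F.1 k,
                       fun k => polyact (\tr A) (mact A F).2 k - polyact (d2 A) F.2 k).
Proof.
rewrite -mact_mul CH2 /mact /=; congr pair; apply: functional_extensionality => k;
rewrite !mxE ?one2E /= ?mulr1 ?mulr0 ?subr0 !polyact_sub !polyact_mul ?polyact_0 !polyact_addf; ring.
Qed.

End PolyAct.



Section Sizes.
Variable R : realType.
Local Notation C := R[i].

Lemma sizeCM (c : C) (Q : {poly C}) n : (size Q <= n)%N -> (size (c%:P * Q)%R <= n)%N.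
Proof. by move=> h; rewrite mul_polyC; apply: leq_trans (size_scale_leq _ _) h. Qed.

Lemma transfer_size (b : C) i j : (size (transfer b i j) <= 2)%N.
Proof.
rewrite /transfer !mxE; apply: sizeCM.
move: i j; apply: ord2_cases; apply: ord2_cases; rewrite /=.
- by rewrite size_polyX.
- by rewrite size_polyN; apply: leq_trans (size_polyC_leq1 _) _.
- by rewrite size_polyN -mul_polyC; apply: sizeCM; rewrite size_polyX.
- by rewrite size_polyC oner_neq0.
Qed.

Lemma natL (x y m : nat) : (x <= m.+1 -> y <= 2 -> (x + y).-1 <= m.+2)%N.
Proof. lia. Qed.

Lemma prod_size (m : nat) (F : nat -> 'M[{poly C}]_2) :
  (forall k i j, (size (F k i j) <= 2)%N) ->
  forall i j, (size ((\prod_(k < m) F k)%R i j) <= m.+1)%N.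
Proof.
move=> hF; elim: m => [|m IH] i j.
  by rewrite big_ord0 one2E; case: (i == j); rewrite /= ?mulr1n ?mulr0n ?size_poly1 ?size_poly0.
rewrite big_ord_recr /= mul2E.
apply: (leq_trans (size_polyD _ _)); rewrite geq_max; apply/andP; split;
  apply: (leq_trans (size_polyMleq _ _)); apply: natL; solve [exact: IH | exact: hF].
Qed.

Lemma disc_size (p : nat) (a : int -> C) : (size (disc_poly p a) <= p.+1)%N.
Proof.
rewrite /disc_poly tr2E.
apply: (leq_trans (size_polyD _ _)); rewrite geq_max; apply/andP; split.
  exact: (@prod_size p (fun k => transfer (a (p.-1 - k)%N%:Z)) (fun k i j => transfer_size _ i j) 0 0).
exact: (@prod_size p (fun k => transfer (a (p.-1 - k)%N%:Z)) (fun k i j => transfer_size _ i j) 1 1).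
Qed.
End Sizes.

Section Floquet.
Variable R : realType.
Local Notation C := R[i].
Local Notation zseq := (zseq R).
Variable a : int -> C.
Hypothesis ha : forall n, in_disk (a n).

Lemma fstep_mact n F : fstep a n F = mact (transfer (a n)) F.
Proof.
rewrite /fstep /mact /transfer !mxE /=; congr pair; apply: functional_extensionality => k;
rewrite -?mul_polyC !(polyact_add, polyact_mul, polyact_opp, polyact_C, polyact_X, polyact_1); ring.
Qed.

Lemma d2_transfer n : d2 (transfer (a n)) = 'X.
Proof.
rewrite /d2 /transfer !mxE /=.
have hr := rho_neq0 (ha n).
rewrite -mul_polyC.
transitivity (((rho (a n))^-1 * (rho (a n))^-1 * (1 - conjc (a n) * a n))%:P * 'X).
  rewrite !(polyCM, polyCB, polyC1); ring.
have -> : (rho (a n))^-1 * (rho (a n))^-1 * (1 - conjc (a n) * a n) = 1.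
  rewrite -{1}(rho_id (a n)) addrK; field; by rewrite hr.
by rewrite polyC1 mul1r.
Qed.

Lemma V_prod n (m : nat) :
  V a (n + m%:Z) = mact (\prod_(i < m) transfer (a (n + (m%:Z - 1 - i%:Z)))) (V a n).
Proof.
elim: m => [|m IH].
  by rewrite big_ord0 mact_1 addr0.
rewrite (_ : n + m.+1%:Z = (n + m%:Z) + 1); last lia.
rewrite (Vstep ha) fstep_mact IH -mact_mul big_ord_recl.
congr (mact (_ * _) _).
  congr (transfer (a _)); rewrite /=; lia.
apply: eq_bigr => i _; congr (transfer (a _)); rewrite lift0; lia.
Qed.

Lemma d2_prod (m : nat) (F : 'I_m -> 'M[{poly C}]_2) :
  d2 (\prod_(i < m) F i) = \prod_(i < m) d2 (F i).
Proof.
elim: m F => [|m IH] F; first by rewrite !big_ord0 d2_1.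
by rewrite !big_ord_recr d2_mul IH.
Qed.

Variable p : nat.
Hypothesis hp : ~~ odd p.
Hypothesis hper : periodic p a.

Definition T (n : int) := \prod_(i < p) transfer (a (n + (p%:Z - 1 - i%:Z))).

Lemma T_per n : T (n + p%:Z) = T n.
Proof.
apply: eq_bigr => i _; congr (transfer _).
by rewrite (_ : n + p%:Z + _ = (n + (p%:Z - 1 - i%:Z)) + p%:Z) ?hper //; lia.
Qed.

Lemma T_shift n : T (n + 1) * transfer (a n) = transfer (a n) * T n.
Proof.
pose G (i : 'I_p.+1) := transfer (a (n + (p%:Z - i%:Z))).
have e1 : \prod_(i < p.+1) G i = T (n + 1) * transfer (a n).
  rewrite big_ord_recr /=; congr (_ * _).
    by apply: eq_bigr => i _; rewrite /G /=; congr (transfer (a _)); lia.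
  by rewrite /G /=; congr (transfer (a _)); lia.
have e2 : \prod_(i < p.+1) G i = transfer (a n) * T n.
  rewrite big_ord_recl /=; congr (_ * _).
    by rewrite /G /= subr0 hper.
  by apply: eq_bigr => i _; rewrite /G; congr (transfer (a _)); rewrite lift0; lia.
by rewrite -e1 e2.
Qed.

Lemma tr_T n : \tr (T n) = disc_poly p a.
Proof.
have step m : \tr (T (m + 1)) = \tr (T m).
  apply: (tr_conj (M := transfer (a m))); last exact: T_shift.
  by rewrite d2_transfer polyX_eq0.
have -> : \tr (T n) = \tr (T 0).
  case: n => m.
    elim: m => [|m IH] //; rewrite (_ : Posz m.+1 = Posz m + 1); last lia.
    by rewrite step.
  elim: m => [|m IH].
    by rewrite -step.
  by rewrite -IH -step (_ : Negz m.+1 + 1 = Negz m) //; lia.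
rewrite /disc_poly; congr (\tr _); apply: eq_bigr => i _; congr (transfer (a _)).
have := ltn_ord i; lia.
Qed.

Lemma d2_T n : d2 (T n) = 'X^p.
Proof.
rewrite /T d2_prod (eq_bigr (fun _ => 'X)) ?prodr_const ?card_ord //.
by move=> i _; rewrite d2_transfer.
Qed.

Lemma V_floquet n k :
  (V a (n + p%:Z + p%:Z)).1 k = polyact (disc_poly p a) (V a (n + p%:Z)).1 k - (V a n).1 (k - p%:Z) /\
  (V a (n + p%:Z + p%:Z)).2 k = polyact (disc_poly p a) (V a (n + p%:Z)).2 k - (V a n).2 (k - p%:Z).
Proof.
have h1 : V a (n + p%:Z) = mact (T n) (V a n) by rewrite V_prod.
have h2 : V a (n + p%:Z + p%:Z) = mact (T n) (mact (T n) (V a n)).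
  by rewrite V_prod -/(T (n + p%:Z)) T_per h1.
rewrite h2 mact_CH h1 /= tr_T d2_T !polyact_Xn; by split.
Qed.

End Floquet.



Section PsiFloquet.
Variable R : realType.
Local Notation C := R[i].
Local Notation zseq := (zseq R).
Variable a : int -> C.
Hypothesis ha : forall n, in_disk (a n).
Variable p : nat.
Hypothesis hp : ~~ odd p.
Hypothesis hper : periodic p a.

Lemma half_p : p = (2 * p./2)%N.
Proof. by rewrite -{1}(odd_double_half p) (negbTE hp) add0n -mul2n. Qed.

Lemma psi_floquet k n : psi a k (n - p%:Z) + psi a k (n + p%:Z) =
  \sum_(i < p.+1) (disc_poly p a)`_i * psi a (k - (i%:Z - (p./2)%:Z)) n.
Proof.
have hq := half_p.
have hpar2 : zparity (n + p%:Z) = zparity n by rewrite zparity_addp.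
have hpar1 : zparity (n - p%:Z) = zparity n by rewrite -{2}(subrK p%:Z n) zparity_addp.
have hh1 : hh (n + p%:Z) = hh n + (p./2)%:Z by rewrite /hh; lia.
have hh2 : hh (n - p%:Z) = hh n - (p./2)%:Z by rewrite /hh; lia.
rewrite /psi hpar1 hpar2 hh1 hh2.
case: (zparity n).
  set K := k + hh n + (p./2)%:Z + 1.
  have [_ F] := V_floquet ha hp hper (n - p%:Z) K.
  rewrite subrK in F.
  rewrite (_ : k + (hh n + (p./2)%:Z) + 1 = K); last by rewrite /K; lia.
  rewrite F (_ : k + (hh n - (p./2)%:Z) + 1 = K - p%:Z); last by rewrite /K; lia.
  rewrite (polyact_widen _ _ (disc_size p a)).
  transitivity (\sum_(i < p.+1) (disc_poly p a)`_i * (V a n).2 (K - i%:Z)); first ring.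
  by apply: eq_bigr => i _; congr (_ * (V a n).2 _); rewrite /K; lia.
set K := k + hh n + (p./2)%:Z.
have [F _] := V_floquet ha hp hper (n - p%:Z) K.
rewrite subrK in F.
rewrite (_ : k + (hh n + (p./2)%:Z) = K); last by rewrite /K; lia.
rewrite F (_ : k + (hh n - (p./2)%:Z) = K - p%:Z); last by rewrite /K; lia.
rewrite (polyact_widen _ _ (disc_size p a)).
transitivity (\sum_(i < p.+1) (disc_poly p a)`_i * (V a n).1 (K - i%:Z)); first ring.
by apply: eq_bigr => i _; congr (_ * (V a n).1 _); rewrite /K; lia.
Qed.

End PsiFloquet.



Section Tri.
Variable R : realType.
Local Notation C := R[i].
Local Notation zseq := (zseq R).
Variable a : int -> C.
Hypothesis ha : forall n, in_disk (a n).

Lemma fwd_supp (m : nat) (k : int) : (k < 0 \/ m%:Z < k) ->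
  (fwd a m).1 k = 0 /\ (fwd a m).2 k = 0.
Proof.
elim: m k => [|m IH] k hk /=.
  by rewrite /d0; case: eqP => [hk0|_] //; exfalso; lia.
rewrite /fstep /=.
have [h1 h2] := IH (k - 1) ltac:(lia).
have [h3 h4] := IH k ltac:(lia).
by rewrite h1 h4; split; ring.
Qed.

Lemma fwd_top (m : nat) : (fwd a m).1 m%:Z != 0.
Proof.
elim: m => [|m IH] /=.
  by rewrite /d0 eqxx oner_neq0.
rewrite /fstep /= (_ : Posz m.+1 - 1 = Posz m); last lia.
have [_ ->] := fwd_supp (m := m) (k := Posz m.+1) ltac:(lia).
rewrite mulr0 subr0 mulf_eq0 negb_or IH andbT invr_eq0.
exact: rho_neq0.
Qed.

Lemma fwd_bot (m : nat) : (fwd a m).2 0 != 0.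
Proof.
elim: m => [|m IH] /=.
  by rewrite /d0 eqxx oner_neq0.
rewrite /fstep /=.
have [-> _] := fwd_supp (m := m) (k := 0 - 1) ltac:(lia).
rewrite mulr0 subr0 mulf_eq0 negb_or IH andbT invr_eq0.
exact: rho_neq0.
Qed.

Definition ext (m : nat) : int :=
  if odd m then - ((m.+1)./2)%:Z else (m./2)%:Z.

Lemma psi_nat k (m : nat) : psi a k m%:Z =
  if odd m then (fwd a m).2 (k + (m./2)%:Z + 1) else (fwd a m).1 (k + (m./2)%:Z).
Proof.
rewrite /psi /zparity /=.
by rewrite (_ : hh (Posz m) = Posz (m./2)) //; rewrite /hh; lia.
Qed.

Lemma psi_ext_neq0 (m : nat) : psi a (ext m) m%:Z != 0.
Proof.
rewrite psi_nat /ext; case: (boolP (odd m)) => ho.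
  rewrite (_ : - ((m.+1)./2)%:Z + (m./2)%:Z + 1 = 0); first exact: fwd_bot.
  lia.
rewrite (_ : (m./2)%:Z + (m./2)%:Z = m%:Z); first exact: fwd_top.
lia.
Qed.

Lemma psi_ext_lt (m m' : nat) : (m' < m)%N -> psi a (ext m) m'%:Z = 0.
Proof.
move=> hm; rewrite psi_nat /ext.
case: (boolP (odd m)) => ho; case: (boolP (odd m')) => ho'.
- by have [_ ->] := fwd_supp (m := m') (k := - ((m.+1)./2)%:Z + (m'./2)%:Z + 1) ltac:(lia).
- by have [-> _] := fwd_supp (m := m') (k := - ((m.+1)./2)%:Z + (m'./2)%:Z) ltac:(lia).
- by have [_ ->] := fwd_supp (m := m') (k := (m./2)%:Z + (m'./2)%:Z + 1) ltac:(lia).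
- by have [-> _] := fwd_supp (m := m') (k := (m./2)%:Z + (m'./2)%:Z) ltac:(lia).
Qed.

Lemma tri (a0 L : nat) (e : nat -> C) :
  (forall k, \sum_(i < L) psi a k (a0 + i)%N%:Z * e i = 0) -> forall i, (i < L)%N -> e i = 0.
Proof.
elim: L => [|L IH] H i hi //.
have eL : e L = 0.
  have := H (ext (a0 + L)); rewrite big_ord_recr /= big1 ?add0r.
    by move/eqP; rewrite mulf_eq0 (negbTE (psi_ext_neq0 _)) /= => /eqP.
  by move=> j _; rewrite psi_ext_lt ?mul0r //; have := ltn_ord j; lia.
have H' : forall k, \sum_(i < L) psi a k (a0 + i)%N%:Z * e i = 0.
  by move=> k; have := H k; rewrite big_ord_recr /= eL mulr0 addr0.
case: (ltngtP i L) => [hl|hl|->] //; first exact: IH.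
lia.
Qed.

Lemma disc_apply_psi (p : nat) (a0 : int -> C) k n :
  disc_apply p a0 a (psi a k) n =
  \sum_(i < p.+1) (disc_poly p a0)`_i * psi a (k - (i%:Z - (p./2)%:Z)) n.
Proof. by rewrite /disc_apply; apply: eq_bigr => i _; rewrite (cmv_pow_psi ha). Qed.

End Tri.



Section LinSum.
Variable R : realType.
Local Notation C := R[i].
Local Notation zseq := (zseq R).
Local Notation zop := (zop R).

Lemma lin_sum (F : zop) : linop F -> zeroop F -> forall N (c : nat -> C) (g : nat -> zseq) n,
  F (fun x => \sum_(i < N) c i * g i x) n = \sum_(i < N) c i * F (g i) n.
Proof.
move=> hl hz; elim=> [|N IH] c g n.
  rewrite big_ord0 -(hz n); congr (F _ n); apply: functional_extensionality => x.
  by rewrite big_ord0.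
rewrite big_ord_recr /= -IH addrC -hl; congr (F _ n); apply: functional_extensionality => x.
by rewrite big_ord_recr /= addrC.
Qed.

Lemma window (u : zseq) (n : int) (p : nat) x : `|x - n| <= p%:Z ->
  u x = \sum_(i < (2 * p).+1) u (n - p%:Z + i%:Z) * @delta R (n - p%:Z + i%:Z) x.
Proof.
move=> hx.
have hi0 : (absz (x - n + p%:Z)%R < (2 * p).+1)%N by lia.
rewrite (bigD1 (Ordinal hi0)) //= big1 ?addr0.
  rewrite /delta (_ : n - p%:Z + (absz (x - n + p%:Z))%:Z = x); last by lia.
  by rewrite eqxx mulr1.
move=> i hi; rewrite /delta; case: eqP => [e|]; last by rewrite mulr0.
exfalso; move/eqP: hi; apply.
apply: val_inj => /=; lia.
Qed.
End LinSum.

Section OpA.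
Variable R : realType.
Local Notation C := R[i].
Local Notation zseq := (zseq R).
Variable b : int -> C.
Hypothesis hb : forall n, in_disk (b n).
Variable p : nat.
Hypothesis hp0 : (0 < p)%N.
Hypothesis hp : ~~ odd p.
Hypothesis hper : periodic p b.

Definition D (u : zseq) (n : int) : C := disc_apply p b b u n - shift_sum p u n.

Lemma D_lin : linop D.
Proof.
move=> c u v n; rewrite /D /disc_apply /shift_sum.
have -> : \sum_(k < p.+1) (disc_poly p b)`_k * cmv_pow b (k%:Z - (p./2)%:Z) (fun x => c * u x + v x) n
  = c * \sum_(k < p.+1) (disc_poly p b)`_k * cmv_pow b (k%:Z - (p./2)%:Z) u n
    + \sum_(k < p.+1) (disc_poly p b)`_k * cmv_pow b (k%:Z - (p./2)%:Z) v n.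
  rewrite mulr_sumr -big_split; apply: eq_bigr => i _ /=; rewrite cmv_pow_lin; ring.
ring.
Qed.

Lemma D_zero : zeroop D.
Proof.
move=> n; rewrite /D /disc_apply /shift_sum big1; first by rewrite addr0 subrr.
by move=> i _; rewrite cmv_pow_zero mulr0.
Qed.

Lemma D_local : local p D.
Proof.
move=> u v n H; rewrite /D /shift_sum.
rewrite !H; try lia.
congr (_ - _); rewrite /disc_apply; apply: eq_bigr => i _; congr (_ * _).
have hl : local p (cmv_pow b (i%:Z - (p./2)%:Z)).
  apply: (local_mono _ (@cmv_pow_local R b _)).
  have := ltn_ord i; have := half_p hp; lia.
exact: hl.
Qed.

Lemma D_expand u n : D u n =
  \sum_(i < (2 * p).+1) u (n - p%:Z + i%:Z) * D (@delta R (n - p%:Z + i%:Z)) n.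
Proof.
rewrite -(lin_sum D_lin D_zero (2 * p).+1 (fun i => u (n - p%:Z + i%:Z)) (fun i => @delta R (n - p%:Z + i%:Z))).
by apply: D_local => m hm; apply: window.
Qed.

Lemma D_psi k n : D (psi b k) n = 0.
Proof.
by rewrite /D (disc_apply_psi hb) -(psi_floquet hb hp hper) /shift_sum subrr.
Qed.

Lemma D_big u n : p%:Z <= n -> D u n = 0.
Proof.
move=> hn.
have [a0 ha0] : exists a0 : nat, n - p%:Z = a0%:Z by exists (absz (n - p%:Z)); lia.
have he : forall i, (i < (2 * p).+1)%N -> D (@delta R (n - p%:Z + i%:Z)) n = 0.
  apply: (tri hb (a0 := a0) (e := fun i => D (@delta R (n - p%:Z + i%:Z)) n)) => k.
  transitivity (D (psi b k) n); last exact: D_psi.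
  rewrite (D_expand (psi b k) n); apply: eq_bigr => i _; congr (psi b k _ * _).
  lia.
rewrite D_expand big1 // => i _; by rewrite he ?mulr0.
Qed.

Lemma D_tau u n : D (tau p%:Z u) (n + p%:Z) = D u n.
Proof.
rewrite /D /disc_apply /shift_sum; congr (_ - _).
  by apply: eq_bigr => i _; rewrite cmv_pow_tau // /tau addrK.
rewrite /tau; congr (u _ + u _); lia.
Qed.

Lemma D_all u n : D u n = 0.
Proof.
have key : forall t : nat, forall n u, p%:Z <= n + (t * p)%N%:Z -> D u n = 0.
  elim=> [|t IH] m w h; first by apply: D_big; lia.
  rewrite -D_tau; apply: IH; move: h; rewrite mulSn; lia.
apply: (key (absz n).+1); rewrite mulSn.
have : (absz n <= absz n * p)%N by rewrite leq_pmulr.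
lia.
Qed.

Lemma opA : disc_apply p b b = shift_sum p.
Proof.
apply: functional_extensionality => u; apply: functional_extensionality => n.
by apply/eqP; rewrite -subr_eq0; apply/eqP; apply: D_all.
Qed.

End OpA.



Section Coeff.
Variable R : realType.
Local Notation C := R[i].

Lemma sq_id (r r' x : C) : conjc r' = r' -> r * r + conjc x * x = 1 ->
  r' * r' = (r * r') * (r * r') + (r' * x) * conjc (r' * x).
Proof.
move=> hc h; rewrite rmorphM /= hc.
apply/eqP; rewrite eq_sym -subr_eq0; apply/eqP.
transitivity ((r' * r') * (r * r + conjc x * x - 1)); first ring.
by rewrite h subrr mulr0.
Qed.

Lemma sqrt_eq (x y : C) : 0 <= x -> 0 <= y -> x * x = y * y -> x = y.
Proof. by move=> hx hy h; rewrite -(sqrCK hx) -(sqrCK hy) !expr2 h. Qed.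

Lemma zpar2 (n : int) : zparity (n + 2) = zparity n.
Proof. rewrite /zparity; lia. Qed.

Variables (a b : int -> C) (s : int).
Hypothesis ha : forall n, in_disk (a n).
Hypothesis hb : forall n, in_disk (b n).
Hypothesis hs : forall n, zparity (n + s) = zparity n.
Hypothesis H2 : forall n, zparity n = false -> E a (n + s) (n + s + 2) = E b n (n + 2).
Hypothesis Hm2 : forall n, E a (n + s) (n + s - 2) = E b n (n - 2).
Hypothesis Hm1 : forall n, E a (n + s) (n + s - 1) = E b n (n - 1).
Hypothesis Hp1 : forall n, E a (n + s) (n + s + 1) = E b n (n + 1).

Lemma coefP k : rho (a (k + s)) * rho (a (k + s + 1)) = rho (b k) * rho (b (k + 1)).
Proof.
case: (boolP (zparity k)) => hk.
  have := Hm2 (k + 2).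
  have hk2 : zparity (k + 2) = true by rewrite zpar2.
  have hk2s : zparity (k + 2 + s) = true by rewrite hs.
  rewrite !E_odd_m2 //.
  rewrite (_ : k + 2 + s - 1 = k + s + 1); last lia.
  rewrite (_ : k + 2 + s - 2 = k + s); last lia.
  rewrite (_ : k + 2 - 1 = k + 1); last lia.
  rewrite (_ : k + 2 - 2 = k); last lia.
  by rewrite mulrC [in RHS]mulrC.
have hk' : zparity k = false by apply/negbTE.
have := H2 hk'.
by rewrite !E_even_p2 // hs.
Qed.

Lemma coefX k : rho (a (k + s + 1)) * a (k + s) = rho (b (k + 1)) * b k.
Proof.
case: (boolP (zparity k)) => hk.
  have := Hm1 (k + 2).
  have hk2 : zparity (k + 2) = true by rewrite zpar2.
  have hk2s : zparity (k + 2 + s) = true by rewrite hs.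
  rewrite !E_odd_m1 //.
  rewrite (_ : k + 2 + s - 1 = k + s + 1); last lia.
  rewrite (_ : k + 2 + s - 2 = k + s); last lia.
  rewrite (_ : k + 2 - 1 = k + 1); last lia.
  rewrite (_ : k + 2 - 2 = k); last lia.
  by move/oppr_inj.
have := Hp1 (k + 1).
have hk1 : zparity (k + 1) = true by rewrite zparity_add1 (negbTE hk).
have hk1s : zparity (k + 1 + s) = true by rewrite hs.
rewrite !E_odd_p1 //.
rewrite (_ : k + 1 + s - 1 = k + s); last lia.
rewrite (_ : k + 1 + s = k + s + 1); last lia.
rewrite (_ : k + 1 - 1 = k); last lia.
by move/oppr_inj; rewrite mulrC [in RHS]mulrC.
Qed.

Lemma coef_rho j : rho (a (j + s)) = rho (b j).
Proof.
have e1 : j + s = (j - 1) + s + 1 by lia.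
have e2 : j = (j - 1) + 1 by lia.
apply: sqrt_eq; first exact: ltW (rho_gt0 (ha _)).
  exact: ltW (rho_gt0 (hb _)).
rewrite e1 {3 4}e2.
rewrite (sq_id (r := rho (a (j - 1 + s))) (conj_rho (ha _)) (rho_id _)).
rewrite (sq_id (r := rho (b (j - 1))) (conj_rho (hb _)) (rho_id _)).
by rewrite coefP coefX.
Qed.

Lemma coef_eq k : a (k + s) = b k.
Proof.
have := coefX k; rewrite (_ : k + s + 1 = (k + 1) + s); last lia.
rewrite coef_rho; apply: mulfI; exact: rho_neq0.
Qed.

End Coeff.



Section B.
Variable R : realType.
Local Notation C := R[i].
Local Notation zseq := (zseq R).
Variables (a0 a : int -> C) (p : nat).
Hypothesis hp0 : (0 < p)%N.
Hypothesis hp : ~~ odd p.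
Hypothesis ha : forall n, in_disk (a n).

Lemma disc_cmv u : disc_apply p a0 a (cmv a u) = cmv a (disc_apply p a0 a u).
Proof.
apply: functional_extensionality => n; rewrite /disc_apply.
rewrite (lin_sum (cmv_lin a) (cmv_zero a) p.+1 (fun k => (disc_poly p a0)`_k)
   (fun k => cmv_pow a (k%:Z - (p./2)%:Z) u)).
by apply: eq_bigr => i _; rewrite cmv_pow_cmv.
Qed.

Hypothesis H : disc_apply p a0 a = shift_sum p.

Lemma comm u : shift_sum p (cmv a u) = cmv a (shift_sum p u).
Proof. by rewrite -H disc_cmv. Qed.

Lemma Erel n m : E a n (m + p%:Z) + E a n (m - p%:Z) = E a (n - p%:Z) m + E a (n + p%:Z) m.
Proof.
have := congr1 (fun f => f n) (comm (delta R m)); rewrite /shift_sum /= => ->.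
rewrite (_ : (fun x => delta R m (x - p%:Z) + delta R m (x + p%:Z)) =
             (fun x => 1 * delta R (m + p%:Z) x + delta R (m - p%:Z) x)).
  by rewrite cmv_lin mul1r.
apply: functional_extensionality => x; rewrite /delta mul1r.
rewrite (_ : (x - p%:Z == m) = (x == m + p%:Z)); last by apply/idP/idP => /eqP h; apply/eqP; lia.
rewrite (_ : (x + p%:Z == m) = (x == m - p%:Z)); last by apply/idP/idP => /eqP h; apply/eqP; lia.
by [].
Qed.

Lemma p_ge2 : (2 <= p)%N.
Proof. lia. Qed.

Lemma Ezero r c : (c <= r - 3 \/ (zparity r = false /\ c = r - 2)) -> E a r c = 0.
Proof.
case=> [h|[h ->]]; last exact: E_even_m2.
by apply: E_far; lia.
Qed.

Lemma Eper n d : (d = -2 \/ d = -1 \/ d = 1 \/ (d = 2 /\ zparity n = false)) ->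
  E a (n + p%:Z) (n + p%:Z + d) = E a n (n + d).
Proof.
move=> hd.
have := Erel (n + p%:Z) (n + d).
have hpar : zparity (n + p%:Z) = zparity n by rewrite zparity_addp.
have hpar2 : zparity (n + p%:Z + p%:Z) = zparity n by rewrite !zparity_addp.
rewrite (@Ezero (n + p%:Z) (n + d - p%:Z)); last first.
  case: hd => [->|[->|[->|[-> hn]]]]; try (left; lia).
  case: (ltngtP p 2) => [|h2|h2]; [lia | left; lia | right; split; [by rewrite hpar | lia]].
rewrite (@Ezero (n + p%:Z + p%:Z) (n + d)); last first.
  case: hd => [->|[->|[->|[-> hn]]]]; try (left; lia).
  case: (ltngtP p 2) => [|h2|h2]; [lia | left; lia | right; split; [by rewrite hpar2 | lia]].
rewrite !addr0 addrK (_ : n + d + p%:Z = n + p%:Z + d); last lia.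
by [].
Qed.

Lemma a_periodic : periodic p a.
Proof.
move=> k; apply: (@coef_eq R a a p%:Z ha ha) => [n|n hn|n|n|n].
- by rewrite zparity_addp.
- by rewrite Eper //; right; right; right.
- by rewrite Eper //; left.
- by rewrite Eper //; right; left.
- by rewrite Eper //; right; right; left.
Qed.


Lemma psi0 (b : int -> C) k : psi b k 0 = if k == 0 then 1 else 0.
Proof. by rewrite /psi /= /hh /= addr0. Qed.

Lemma pick_sum (b : int -> C) (c : nat -> C) (i0 : nat) : (i0 < p.+1)%N ->
  \sum_(i < p.+1) c i * psi b (i0%:Z - (p./2)%:Z - (i%:Z - (p./2)%:Z)) 0 = c i0.
Proof.
move=> hi0; rewrite (bigD1 (Ordinal hi0)) //= big1 ?addr0.
  by rewrite psi0 (_ : _ - _ = 0) ?eqxx ?mulr1 //; lia.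
move=> i hi; rewrite psi0; case: eqP => [e|]; last by rewrite mulr0.
exfalso; move/eqP: hi; apply; apply: val_inj => /=; lia.
Qed.

Lemma disc_eq : disc_poly p a = disc_poly p a0.
Proof.
apply/polyP => i; case: (leqP i p) => hi.
  have := congr1 (fun f => f (psi a (i%:Z - (p./2)%:Z)) 0) H => /=.
  rewrite (disc_apply_psi ha) /shift_sum (psi_floquet ha hp a_periodic).
  by rewrite (pick_sum a (fun j : nat => (disc_poly p a0)`_j)) ?(pick_sum a (fun j : nat => (disc_poly p a)`_j)) => // ->.
by rewrite !nth_default //; apply: leq_trans (disc_size _ _) _.
Qed.
End B.

Unset Implicit Arguments.

Theorem theorem4p1 (R : realType) (p : nat) (alpha0 alpha : int -> R[i]) :
  (0 < p)%N -> ~~ odd p ->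
  is_cmv_coeffs alpha0 -> periodic p alpha0 ->
  is_cmv_coeffs alpha ->
  (disc_apply p alpha0 alpha = shift_sum p <-> in_iso_torus p alpha0 (cmv alpha)).
Proof.
move=> hp0 hp h0 hper0 ha; split.
  move=> H; exists alpha; split => //.
    exact: (a_periodic hp0 hp ha H).
  exact: (disc_eq hp0 hp ha H).
case=> b [hb hperb hC hdisc].
have eab : forall k, alpha k = b k.
  move=> k; rewrite -{1}(addr0 k).
  apply: (@coef_eq R alpha b 0 ha hb) => [n|n hn|n|n|n]; rewrite ?addr0 //; by rewrite /E hC.
have -> : alpha = b by apply: functional_extensionality.
rewrite (_ : disc_apply p alpha0 b = disc_apply p b b); first exact: (opA hb hp0 hp hperb).
by rewrite /disc_apply hdisc.
Qed.
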